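(* In the setting of the context: if $\beta<\beta_{cr}$, then there is a constant $C$ (independent of $n$, $t$ and the starting state) such that for every starting magnetization $\bm s$ and every $t\ge0$, \[ \sum_{i=1}^m\mathrm{Var}_{\bm s}(S_t^{(i)})\le\frac Cn\qquad\text{and}\qquad\mathrm{Var}_{\bm s}\|\bm S_t\|_1\le\frac Cn. \] If $\beta=\beta_{cr}$, then there is a constant $C$ (independent of $n$, $t$ and the starting state) such that $\mathrm{Var}_{\bm s}\|\bm S_t\|_1\le Ct/n^2$ for every starting magnetization $\bm s$ and every $t\ge 0$.
   Context: Fix $m\ge1$, proportions $p_1,\dots,p_m>0$ with $\sum_ip_i=1$, a symmetric matrix $\mathbf K=(k_{ij})$ with all $k_{ij}>0$, and $\beta\ge0$; $n$ ranges over positive integers with $np_i\in\mathbb N$. The vertex set $V=\{1,\dots,n\}$ is partitioned into blocks $G_1,\dots,G_m$ with $|G_i|=np_i$; for $v\in G_i,w\in G_j$ put $K(v,w)=k_{ij}/n$. The Glauber dynamics $(\sigma_t)$ on $\{-1,+1\}^V$ picks at each step a uniform random vertex $v$ and sets its spin to $\pm1$ with probability $\frac{1\pm\tanh(\beta S^v)}2$, $S^v=\sum_{w\ne v}K(v,w)\sigma(w)$. The magnetization chain $\bm S_t=(S_t^{(1)},\dots,S_t^{(m)})$, $S_t^{(i)}=\frac1n\sum_{v\in G_i}\sigma_t(v)$, is a Markov chain; $\mathrm{Var}_{\bm s}$ denotes variance when it starts at $\bm s$. Let $\mathbf B=(p_ik_{ij})$, $\mathbf a>0$ its left Perron eigenvector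 normalized by $\|\mathbf a\|_1=1$, and $\beta_{cr}=(\sum_{i,j}a_ip_ik_{ij})^{-1}$. *)

(* Defs.v *)
From HB Require Import structures.
From mathcomp Require Import all_boot all_order all_algebra.
From mathcomp Require Import reals sequences exp.
Set Implicit Arguments. Unset Strict Implicit. Unset Printing Implicit Defensive.
Import Order.TTheory GRing.Theory Num.Theory.
Local Open Scope ring_scope.

Section Glauber.
Variable R : realType.

Definition tanhR (x : R) : R := (expR x - expR (- x)) / (expR x + expR (- x)).

(* spin configurations on V = {0,...,n-1}; true = +1, false = -1 *)
Definition conf (n : nat) := {ffun 'I_n -> bool}.
Definition spin (b : bool) : R := if b then 1 else -1.

(* g : 'I_n -> 'I_m assigns each vertex its block; K(v,w) = k (g v) (g w) / n *)
Definition Kint (m n : nat) (k : 'I_m -> 'I_m -> R) (g : 'I_n -> 'I_m)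
  (v w : 'I_n) : R := k (g v) (g w) / n%:R.

Definition locfield (m n : nat) (k : 'I_m -> 'I_m -> R) (g : 'I_n -> 'I_m)
  (s : conf n) (v : 'I_n) : R :=
  \sum_(w < n | w != v) Kint k g v w * spin (s w).

Definition glauberP (m n : nat) (beta : R) (k : 'I_m -> 'I_m -> R)
  (g : 'I_n -> 'I_m) (s t : conf n) : R :=
  \sum_(v < n) (n%:R)^-1 *
    (if [forall w : 'I_n, (w != v) ==> (t w == s w)] then
       (if t v then (1 + tanhR (beta * locfield k g s v)) / 2
        else (1 - tanhR (beta * locfield k g s v)) / 2)
     else 0).

Fixpoint glauberDist (m n : nat) (beta : R) (k : 'I_m -> 'I_m -> R)
  (g : 'I_n -> 'I_m) (tm : nat) (s : conf n) (t : conf n) : R :=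
  match tm with
  | 0 => if t == s then 1 else 0
  | tm'.+1 => \sum_(r : conf n) glauberDist beta k g tm' s r * glauberP beta k g r t
  end.

Definition Expect (m n : nat) (beta : R) (k : 'I_m -> 'I_m -> R)
  (g : 'I_n -> 'I_m) (tm : nat) (s : conf n) (f : conf n -> R) : R :=
  \sum_(t : conf n) glauberDist beta k g tm s t * f t.

Definition Var (m n : nat) (beta : R) (k : 'I_m -> 'I_m -> R)
  (g : 'I_n -> 'I_m) (tm : nat) (s : conf n) (f : conf n -> R) : R :=
  Expect beta k g tm s (fun t => (f t - Expect beta k g tm s f) ^+ 2).

Definition magn (m n : nat) (g : 'I_n -> 'I_m) (i : 'I_m) (t : conf n) : R :=
  (n%:R)^-1 * \sum_(v < n | g v == i) spin (t v).

Definition magnL1 (m n : nat) (g : 'I_n -> 'I_m) (t : conf n) : R :=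
  \sum_(i < m) `|magn g i t|.

Definition left_perron (m : nat) (p : 'I_m -> R) (k : 'I_m -> 'I_m -> R)
  (a : 'I_m -> R) : Prop :=
  (forall i, 0 < a i) /\ \sum_(i < m) a i = 1 /\
  exists lam : R, forall j, \sum_(i < m) a i * (p i * k i j) = lam * a j.

Definition beta_cr (m : nat) (p : 'I_m -> R) (k : 'I_m -> 'I_m -> R)
  (a : 'I_m -> R) : R :=
  (\sum_(i < m) \sum_(j < m) a i * p i * k i j)^-1.

Definition block_partition (m n : nat) (p : 'I_m -> R) (g : 'I_n -> 'I_m) : Prop :=
  forall i, (#|[set v | g v == i]|)%:R = n%:R * p i.

End Glauber.

Arguments tanhR {R}.
Arguments spin {R}.
Arguments Kint {R m n}.
Arguments locfield {R m n}.
Arguments glauberP {R m n}.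
Arguments glauberDist {R m n}.
Arguments Expect {R m n}.
Arguments Var {R m n}.
Arguments magn {R m n}.
Arguments magnL1 {R m n}.
Arguments left_perron {R m}.
Arguments beta_cr {R m}.
Arguments block_partition {R m n}.

(* Main.v *)
Require Import Defs.
From HB Require Import structures.
From mathcomp Require Import all_boot all_order all_algebra.
From mathcomp Require Import reals sequences exp.
Import Order.TTheory GRing.Theory Num.Theory.
Local Open Scope ring_scope.
From mathcomp Require Import ring lra.
From mathcomp Require classical_sets boolp topology normedtype derive realfun interval_inference.

Module TanhFacts.
Import classical_sets boolp topology normedtype derive realfun interval_inference.
Import Order.TTheory GRing.Theory Num.Theory numFieldNormedType.Exports.
Local Open Scope ring_scope.
Section T.
Context {R : realType}.

Lemma phi_ge0 (u : R) : 0 <= u -> (1 - u) * expR u <= (1 + u) * expR (- u).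
Proof.
move=> u0.
pose phi := fun x : R => (1 + x) * expR (- x) - (1 - x) * expR x.
pose dphi := fun x : R => x * (expR x - expR (- x)).
have D (x : R) : is_derive x 1 phi (dphi x).
  have h1 : is_derive x 1 (fun z : R => expR (- z)) (- expR (- x)).
    have := @is_derive1_comp R expR (fun z => - z) x (expR (- x)) (-1).
    rewrite mulrN1; apply.
  rewrite /phi /dphi.
  apply: trigger_derive.

  by rewrite /GRing.scale /=; ring.
have [->|upos] := eqVneq u 0; first by rewrite oppr0 !expR0; lra.
have ul : 0 < u by rewrite lt_def upos u0.
have [|c cI] := MVT ul (fun x _ => D x).
  apply/continuous_subspaceT=> r.
  apply/differentiable_continuous/derivable1_diffP. have Dr := D r; exact: ex_derive.
move=> E.
have : 0 <= phi u - phi 0.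
  rewrite E /dphi; apply: mulr_ge0; last lra.
  have c0 : 0 < c by move: cI; rewrite in_itv /= => /andP[].
  apply: mulr_ge0; first exact: ltW.
  by rewrite subr_ge0 ler_expR; lra.
by rewrite /phi oppr0 expR0; lra.
Qed.

Lemma tanhE (x : R) : tanhR x = (expR x ^+ 2 - 1) / (expR x ^+ 2 + 1).
Proof.
rewrite /tanhR expRN.
have E0 : expR x != 0 by rewrite gt_eqF // expR_gt0.
have E1 : expR x ^+ 2 + 1 != 0 by rewrite gt_eqF // ltr_wpDl // ?sqr_ge0.
have E2 : expR x + (expR x)^-1 != 0.
  by rewrite gt_eqF // addr_gt0 // ?invr_gt0 expR_gt0.
by field; rewrite E0 E1.
Qed.

Lemma tanh_bnd (x : R) : -1 <= tanhR x <= 1.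
Proof.
rewrite tanhE; set e := expR x ^+ 2.
have e0 : 0 <= e by rewrite /e sqr_ge0.
have d0 : 0 < e + 1 by lra.
by rewrite ler_pdivlMr // ler_pdivrMr //; apply/andP; split; lra.
Qed.

Lemma tanhN (x : R) : tanhR (- x) = - tanhR x.
Proof. by rewrite /tanhR opprK [X in _ / X]addrC -mulNr opprB. Qed.

Lemma tanh_ge0 (x : R) : 0 <= x -> 0 <= tanhR x.
Proof.
move=> x0; rewrite tanhE; apply: divr_ge0; last first.
  by apply: addr_ge0 => //; exact: sqr_ge0.
have : 1 <= expR x by have := expR_ge1Dx x; lra.
by move=> h; rewrite subr_ge0; nra.
Qed.

Lemma tanh_le (x : R) : 0 <= x -> tanhR x <= x.
Proof.
move=> x0; have := @phi_ge0 x x0; rewrite /tanhR.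
have p : 0 < expR x + expR (- x) by rewrite addr_gt0 // expR_gt0.
rewrite ler_pdivrMr //; lra.
Qed.

Lemma tanh_sub (x y : R) :
  tanhR x - tanhR y = tanhR (x - y) * (1 - tanhR x * tanhR y).
Proof.
rewrite !tanhE expRD expRN.
have E0 : expR x != 0 by rewrite gt_eqF // expR_gt0.
have F0 : expR y != 0 by rewrite gt_eqF // expR_gt0.
have E1 : expR x ^+ 2 + 1 != 0 by rewrite gt_eqF // ltr_wpDl // ?sqr_ge0.
have F1 : expR y ^+ 2 + 1 != 0 by rewrite gt_eqF // ltr_wpDl // ?sqr_ge0.
have G1 : (expR x * (expR y)^-1) ^+ 2 + 1 != 0 by rewrite gt_eqF // ltr_wpDl // ?sqr_ge0.
have H : expR x ^+ 2 + expR y ^+ 2 != 0.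
  by rewrite gt_eqF // ltr_wpDr // ?sqr_ge0 // exprn_gt0 // expR_gt0.
by field; rewrite F1 E1 F0 H.
Qed.

Lemma tanh_lip (x y : R) : `|tanhR x - tanhR y| <= `|x - y|.
Proof.
wlog yx : x y / y <= x.
  move=> W; have [|/ltW] := leP y x; first exact: W.
  by move=> /W; rewrite distrC [`|x - y|]distrC.
have d0 : 0 <= x - y by lra.
rewrite [`|x - y|]ger0_norm //.
have := tanh_bnd x; have := tanh_bnd y; have := @tanh_ge0 _ d0; have := @tanh_le _ d0.
have := tanh_sub x y.
set tx := tanhR x; set ty := tanhR y; set td := tanhR (x - y) => E H1 H2 H3 H4.
have P : 0 <= 1 - tx * ty by nra.
have Q : 0 <= tx - ty by rewrite E; apply: mulr_ge0.
rewrite ger0_norm //.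
have [y0|y0] := leP 0 y.
  have : 0 <= tx * ty by apply: mulr_ge0; apply: tanh_ge0 => //; lra.
  move=> ?; rewrite E; nra.
have [x0|x0] := leP x 0.
  have : 0 <= tx * ty.
    have a : tx <= 0 by rewrite -oppr_ge0 /tx -tanhN tanh_ge0 // oppr_ge0.
    have b : ty <= 0 by rewrite -oppr_ge0 /ty -tanhN tanh_ge0 // oppr_ge0 ltW.
    nra.
  move=> ?; rewrite E; nra.
have a : tx <= x by apply: tanh_le; lra.
have b : - ty <= - y by rewrite /ty -tanhN; apply: tanh_le; lra.
lra.
Qed.
End T.

End TanhFacts.
Import TanhFacts.

Section Chain.
Context (R : realType) (m n : nat) (beta : R) (k : 'I_m -> 'I_m -> R) (g : 'I_n -> 'I_m).
Context (n0 : (0 < n)%N).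

Definition setv (x : conf n) (v : 'I_n) (b : bool) : conf n :=
  [ffun w => if w == v then b else x w].
Definition flip (x : conf n) u := setv x u (~~ x u).
Definition qq (x : conf n) v : R := (1 + tanhR (beta * locfield k g x v)) / 2.
Definition PF (f : conf n -> R) (x : conf n) : R :=
  \sum_t glauberP beta k g x t * f t.

Lemma KL f x : PF f x = \sum_v n%:R^-1 *
  (qq x v * f (setv x v true) + (1 - qq x v) * f (setv x v false)).
Proof.
rewrite /PF /glauberP.
under eq_bigr do rewrite mulr_suml.
rewrite exchange_big /=; apply: eq_bigr => v _.
under eq_bigr do rewrite -mulrA.
rewrite -mulr_sumr; congr (_ * _).
set c := fun t : conf n => [forall w : 'I_n, (w != v) ==> (t w == x w)].
rewrite (eq_bigr (fun t => if c t then
   (if t v then (1 + tanhR (beta * locfield k g x v)) / 2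
        else (1 - tanhR (beta * locfield k g x v)) / 2) * f t else 0)); last first.
  by move=> t _; rewrite /c; case: ifP => _ //; rewrite mul0r.
rewrite -big_mkcond /=.
rewrite (reindex_onto (setv x v) (fun t => t v)); last first.
  move=> t /forallP ct; apply/ffunP => w; rewrite ffunE.
  by case: eqP => [->//|/eqP wv]; move: (ct w); rewrite wv /= => /eqP.
rewrite (eq_bigl predT); last first.
  move=> b; rewrite /= /setv ffunE eqxx eqxx andbT; apply/forallP => w.
  by rewrite ffunE; case: (w == v); rewrite /= ?eqxx.
rewrite big_bool /= /setv !ffunE eqxx /qq; congr (_ + _); congr (_ * _).
by field.
Qed.


Lemma qq_ge0 x v : 0 <= qq x v.
Proof. by rewrite /qq; have /andP[] := tanh_bnd (beta * locfield k g x v); lra. Qed.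
Lemma qq_le1 x v : qq x v <= 1.
Proof. by rewrite /qq; have /andP[] := tanh_bnd (beta * locfield k g x v); lra. Qed.

Lemma nR_gt0 : 0 < n%:R :> R.
Proof. by rewrite ltr0n. Qed.

Lemma sum_inv_n : \sum_(v < n) n%:R^-1 = 1 :> R.
Proof.
rewrite sumr_const card_ord -[_ *+ n]mulr_natr mulVf //.
by rewrite gt_eqF // nR_gt0.
Qed.

Lemma glauberP_ge0 x y : 0 <= glauberP beta k g x y.
Proof.
apply: sumr_ge0 => v _; apply: mulr_ge0; first by rewrite invr_ge0 ler0n.
case: ifP => _ //; have /andP[] := tanh_bnd (beta * locfield k g x v).
by case: (y v) => ? ?; lra.
Qed.

Lemma PF_ext f h x : (forall y, f y = h y) -> PF f x = PF h x.
Proof. by move=> fh; apply: eq_bigr => y _; rewrite fh. Qed.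

Lemma PF1 x : PF (fun _ => 1) x = 1.
Proof.
rewrite KL -[RHS]sum_inv_n; apply: eq_bigr => v _.
by rewrite !mulr1 addrC subrK mulr1.
Qed.

Lemma GL (T : finType) (d : T -> R) (f : T -> R) (c : R) :
  \sum_t d t = 1 ->
  \sum_t d t * (f t - c) ^+ 2 =
  \sum_t d t * f t ^+ 2 - (\sum_t d t * f t) ^+ 2 + (\sum_t d t * f t - c) ^+ 2.
Proof.
move=> d1.
rewrite (eq_bigr (fun t => d t * f t ^+ 2 - (2 * c) * (d t * f t) + c ^+ 2 * d t));
  last by move=> t _; ring.
rewrite big_split sumrB /= -!mulr_sumr d1; ring.
Qed.

Lemma PFmass x : \sum_y glauberP beta k g x y = 1.
Proof. by rewrite -(PF1 x); apply: eq_bigr => y _; rewrite mulr1. Qed.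

Lemma dist_ge0 t s y : 0 <= glauberDist beta k g t s y.
Proof.
elim: t y => [|t IH] y /=; first by case: ifP.
by apply: sumr_ge0 => r _; apply: mulr_ge0 => //; exact: glauberP_ge0.
Qed.

Lemma E0 s f : Expect beta k g 0 s f = f s.
Proof.
rewrite /Expect (bigD1 s) //= eqxx mul1r big1 ?addr0 // => y /negbTE ->.
by rewrite mul0r.
Qed.

Lemma ES t s f : Expect beta k g t.+1 s f = Expect beta k g t s (PF f).
Proof.
rewrite /Expect /= /PF.
under eq_bigr do rewrite mulr_suml.
rewrite exchange_big /=; apply: eq_bigr => r _.
by rewrite mulr_sumr; apply: eq_bigr => y _; rewrite mulrA.
Qed.

Lemma Eext t s f h : (forall y, f y = h y) ->
  Expect beta k g t s f = Expect beta k g t s h.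
Proof. by move=> fh; apply: eq_bigr => y _; rewrite fh. Qed.

Lemma Emass t s : \sum_y glauberDist beta k g t s y = 1.
Proof.
suff : Expect beta k g t s (fun _ => 1) = 1.
  by rewrite /Expect => <-; apply: eq_bigr => y _; rewrite mulr1.
elim: t => [|t IH]; first by rewrite E0.
by rewrite ES (@Eext t s _ (fun _ => 1)) // => y; rewrite PF1.
Qed.

Lemma Emono t s f h : (forall y, f y <= h y) ->
  Expect beta k g t s f <= Expect beta k g t s h.
Proof.
move=> fh; apply: ler_sum => y _; apply: ler_wpM2l => //; exact: dist_ge0.
Qed.

Lemma EB t s f h : Expect beta k g t s (fun y => f y - h y) =
  Expect beta k g t s f - Expect beta k g t s h.
Proof.
rewrite /Expect -sumrB; apply: eq_bigr => y _; ring.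
Qed.

Lemma Econst t s c : Expect beta k g t s (fun _ => c) = c.
Proof. by rewrite /Expect -mulr_suml Emass mul1r. Qed.

Definition VV t s f := Expect beta k g t s (fun y => f y ^+ 2) - (Expect beta k g t s f) ^+ 2.

Lemma VarE t s f : Var beta k g t s f = VV t s f.
Proof.
by rewrite /Var /Expect GL ?Emass // subrr expr0n /= addr0.
Qed.

Lemma VS t s f : VV t.+1 s f =
  Expect beta k g t s (fun y => PF (fun z => f z ^+ 2) y - (PF f y) ^+ 2)
  + VV t s (PF f).
Proof.
rewrite /VV !ES EB; ring.
Qed.


Lemma sum_blocks (h : 'I_m -> R) :
  \sum_(v < n) h (g v) = \sum_(j < m) h j * (#|[set v | g v == j]|)%:R.
Proof.
rewrite (partition_big (fun v => g v) predT) //=; apply: eq_bigr => j _.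
rewrite (eq_bigr (fun _ => h j)); last by move=> v /eqP ->.
by rewrite sumr_const -mulr_natr cardsE mul1r mulr_natr.
Qed.

Lemma sum_single (P : pred 'I_n) (h : 'I_n -> R) u :
  (forall v, v != u -> h v = 0) ->
  \sum_(v | P v) h v = if P u then h u else 0.
Proof.
move=> hz; case: ifP => Pu.
  rewrite (bigD1 u) //= big1 ?addr0 // => v /andP[_]; exact: hz.
apply: big1 => v Pv; apply: hz; apply/eqP => vu; move: Pv; by rewrite vu Pu.
Qed.

Lemma setv_id x v : setv x v (x v) = x.
Proof. by apply/ffunP => w; rewrite ffunE; case: eqP => [->|]. Qed.

Lemma setv_cases x v b : setv x v b = x \/ setv x v b = flip x v.
Proof.
case: (boolP (b == x v)) => [/eqP ->|nb]; first by left; rewrite setv_id.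
right; rewrite /flip; congr setv; move: nb; by case: b; case: (x v).
Qed.

Lemma setv_flip_same x u b : setv (flip x u) u b = setv x u b.
Proof.
by apply/ffunP => w; rewrite !ffunE; case: eqP => // /eqP wu; rewrite ?ffunE ?(negbTE wu).
Qed.

Lemma setv_flip_comm x u v b : v != u ->
  setv (flip x u) v b = flip (setv x v b) u.
Proof.
move=> vu; apply/ffunP => w; rewrite !ffunE [u == v]eq_sym (negbTE vu).
case: (w =P v) => [->|_]; last by [].
by rewrite (negbTE vu).
Qed.

Lemma setvT_flip x v : setv x v true = flip (setv x v false) v.
Proof.
by apply/ffunP => w; rewrite !ffunE eqxx; case: (w == v).
Qed.

Lemma flip_other x u w : w != u -> flip x u w = x w.
Proof. by move=> wu; rewrite ffunE (negbTE wu). Qed.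

Lemma flip_self x u : flip x u u = ~~ x u.
Proof. by rewrite ffunE eqxx. Qed.

Lemma locfield_flip_same x u : locfield k g (flip x u) u = locfield k g x u.
Proof. by apply: eq_bigr => w wu; rewrite flip_other. Qed.

Lemma locfield_flip_diff x u v : v != u ->
  locfield k g (flip x u) v - locfield k g x v =
  Kint k g v u * (spin (~~ x u) - spin (x u)).
Proof.
move=> vu; rewrite /locfield -sumrB.
rewrite (@sum_single (fun w => w != v) _ u); last first.
  by move=> w wu; rewrite flip_other // subrr.
by rewrite eq_sym vu flip_self mulrBr.
Qed.

Definition Lipc (a : 'I_m -> R) (f : conf n -> R) (L : R) :=
  forall x u, `|f (flip x u) - f x| <= L * a (g u).

Lemma sqr_le (d L : R) : `|d| <= L -> d ^+ 2 <= L ^+ 2.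
Proof. by rewrite ler_norml => /andP[h1 h2]; nra. Qed.

Lemma Gamma_bnd (a : 'I_m -> R) f L x :
  (forall i, 0 <= a i <= 1) -> 0 <= L -> Lipc a f L ->
  PF (fun z => f z ^+ 2) x - (PF f x) ^+ 2 <= L ^+ 2.
Proof.
move=> a01 L0 Lf.
have := @GL _ (glauberP beta k g x) f (f x) (PFmass x).
rewrite -/(PF _ x) -/(PF _ x) => E.
have : PF (fun y => (f y - f x) ^+ 2) x <= L ^+ 2.
  rewrite KL; apply: (@le_trans _ _ (\sum_(v < n) n%:R^-1 * L ^+ 2)); last first.
    by rewrite -mulr_suml sum_inv_n mul1r.
  apply: ler_sum => v _; apply: ler_wpM2l.
    by rewrite invr_ge0 ler0n.
  have B b : (f (setv x v b) - f x) ^+ 2 <= L ^+ 2.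
    case: (setv_cases x v b) => ->; first by rewrite subrr expr0n /= sqr_ge0.
    apply: sqr_le; apply: le_trans (Lf x v) _.
    by have /andP[? ?] := a01 (g v); nra.
  have := B true; have := B false; have := qq_ge0 x v; have := qq_le1 x v.
  nra.
have : 0 <= (PF f x - f x) ^+ 2 by exact: sqr_ge0.
rewrite /PF in E *; lra.
Qed.


Lemma qq_diff x u v : 0 <= beta -> (forall i j, 0 < k i j) -> v != u ->
  `|qq (flip x u) v - qq x v| <= beta * k (g v) (g u) / n%:R.
Proof.
move=> b0 kpos vu.
have -> : qq (flip x u) v - qq x v =
   (tanhR (beta * locfield k g (flip x u) v) - tanhR (beta * locfield k g x v)) / 2.
  by rewrite /qq; field.
have H := tanh_lip (beta * locfield k g (flip x u) v) (beta * locfield k g x v).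
have D : `|beta * locfield k g (flip x u) v - beta * locfield k g x v|
     = beta * (2 * (k (g v) (g u) / n%:R)).
  rewrite -mulrBr locfield_flip_diff // normrM (ger0_norm b0) normrM.
  have -> : `|spin (~~ x u) - spin (x u)| = 2 :> R.
    case: (x u); rewrite /spin /=; [rewrite -opprD normrN|rewrite opprK]; by rewrite ger0_norm //; lra.

  rewrite /Kint ger0_norm; last by apply: divr_ge0; [exact: ltW | exact: ler0n].
  by ring.
rewrite D in H.
rewrite normrM (ger0_norm (_ : 0 <= 2^-1)) ?invr_ge0 //.
lra.
Qed.

Lemma contract (a p : 'I_m -> R) (lam : R) f L :
  (forall i, 0 < a i) -> (forall i j, 0 < k i j) -> 0 <= beta ->
  (forall j, \sum_i a i * (p i * k i j) = lam * a j) ->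
  block_partition p g ->
  0 <= L -> Lipc a f L -> Lipc a (PF f) ((1 - (1 - beta * lam) / n%:R) * L).
Proof.
move=> apos kpos b0 eig bp L0 Lf x u.
have nn0 : n%:R != 0 :> R by rewrite gt_eqF // nR_gt0.
have ni0 : 0 <= n%:R^-1 :> R by rewrite invr_ge0 ler0n.
set y := flip x u.
pose T := fun z v => n%:R^-1 *
   (qq z v * f (setv z v true) + (1 - qq z v) * f (setv z v false)).
have -> : PF f y - PF f x = \sum_v (T y v - T x v) by rewrite !KL sumrB.
have Tu : T y u - T x u = 0.
  by rewrite /T /y !setv_flip_same /qq locfield_flip_same subrr.
pose A := n%:R^-1 * (L * a (g u)).
pose B := fun v => n%:R^-1 * (beta * k (g v) (g u) / n%:R * (L * a (g v))).
have B0 v : 0 <= B v.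
  apply: mulr_ge0 => //; apply: mulr_ge0; last by apply: mulr_ge0 => //; exact: ltW.
  by apply: divr_ge0; [apply: mulr_ge0 => //; exact: ltW | exact: ler0n].
have Tv v : v != u -> `|T y v - T x v| <= A + B v.
  move=> vu.
  rewrite /T -mulrBr normrM ger0_norm // /A /B -mulrDr; apply: ler_wpM2l => //.
  rewrite /y !setv_flip_comm //.
  set zT := setv x v true; set zF := setv x v false.
  have h1 : `|f (flip zT u) - f zT| <= L * a (g u) := Lf zT u.
  have h0 : `|f (flip zF u) - f zF| <= L * a (g u) := Lf zF u.
  have hB : `|f zT - f zF| <= L * a (g v) by rewrite /zT setvT_flip; exact: Lf.
  have hq := @qq_diff x u v b0 kpos vu.
  have q0 := qq_ge0 (flip x u) v; have q1 := qq_le1 (flip x u) v.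
  set qy := qq (flip x u) v; set qx := qq x v.
  have -> : qy * f (flip zT u) + (1 - qy) * f (flip zF u) - (qx * f zT + (1 - qx) * f zF)
     = qy * (f (flip zT u) - f zT) + (1 - qy) * (f (flip zF u) - f zF)
       + (qy - qx) * (f zT - f zF) by ring.
  have P1 : `|qy * (f (flip zT u) - f zT)| <= qy * (L * a (g u)).
    by rewrite normrM ger0_norm // ler_wpM2l.
  have P0 : `|(1 - qy) * (f (flip zF u) - f zF)| <= (1 - qy) * (L * a (g u)).
    by rewrite normrM ger0_norm ?subr_ge0 // ler_wpM2l ?subr_ge0.
  have P2 : `|(qy - qx) * (f zT - f zF)| <= beta * k (g v) (g u) / n%:R * (L * a (g v)).
    by rewrite normrM; apply: ler_pM.
  apply: le_trans (ler_normD _ _) _.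
  have := ler_normD (qy * (f (flip zT u) - f zT)) ((1 - qy) * (f (flip zF u) - f zF)).
  lra.
apply: le_trans (ler_norm_sum _ _ _) _.
rewrite (bigD1 u) //= Tu normr0 add0r.
apply: (@le_trans _ _ (\sum_(v < n | v != u) (A + B v))); first by apply: ler_sum => v vu; exact: Tv.
rewrite big_split /=.
have SA : \sum_(v < n | v != u) A = A * n%:R - A.
  have E : \sum_(v < n) A = A * n%:R by rewrite sumr_const card_ord mulr_natr.
  rewrite (bigD1 u) //= in E; lra.
have SB : \sum_(v < n | v != u) B v <= \sum_(v < n) B v.
  by rewrite [X in _ <= X](bigD1 u) //= lerDr.
have SB2 : \sum_(v < n) B v = n%:R^-1 * (beta / n%:R * L) * (n%:R * (lam * a (g u))).
  have -> : \sum_(v < n) B v = n%:R^-1 * (beta / n%:R * L) *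
      \sum_(v < n) (fun j => k j (g u) * a j) (g v).
    by rewrite mulr_sumr; apply: eq_bigr => v _; rewrite /B; ring.
  have SBL := sum_blocks (fun j => k j (g u) * a j); rewrite /= in SBL.
  rewrite SBL -eig mulr_sumr; congr (_ * _); apply: eq_bigr => j _.
  rewrite bp; ring.
have : 0 <= \sum_(v < n | v != u) B v by apply: sumr_ge0.
rewrite SA.
set S := \sum_(v < n | v != u) B v.
move: SB; rewrite SB2 => SB _.
have -> : (1 - (1 - beta * lam) / n%:R) * L * a (g u) =
   A * n%:R - A + n%:R^-1 * (beta / n%:R * L) * (n%:R * (lam * a (g u))).
  by rewrite /A; field.
by rewrite lerD2l.
Qed.

Lemma main_ind (a : 'I_m -> R) (rho : R) (D : nat -> R) :
  (forall i, 0 <= a i <= 1) ->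
  (forall f L, 0 <= L -> Lipc a f L -> Lipc a (PF f) (rho * L)) ->
  0 <= rho ->
  0 <= D 0%N -> (forall t, 1 + rho ^+ 2 * D t <= D t.+1) ->
  forall t s f L, 0 <= L -> Lipc a f L -> VV t s f <= L ^+ 2 * D t.
Proof.
move=> a01 C r0 D0 DS; elim=> [|t IH] s f L L0 Lf.
  rewrite /VV !E0 subrr; apply: mulr_ge0 => //; exact: sqr_ge0.
rewrite VS.
have G : Expect beta k g t s
    (fun y => PF (fun z => f z ^+ 2) y - (PF f y) ^+ 2) <= L ^+ 2.
  rewrite -[X in _ <= X](Econst t s); apply: Emono => y.
  exact: Gamma_bnd.
have := IH s (PF f) (rho * L) (mulr_ge0 r0 L0) (C f L L0 Lf).
have := ler_wpM2l (sqr_ge0 L) (DS t).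
rewrite exprMn; nra.
Qed.

Lemma sum_single_gen (I : finType) (P : pred I) (h : I -> R) u :
  (forall v, v != u -> h v = 0) ->
  \sum_(v | P v) h v = if P u then h u else 0.
Proof.
move=> hz; case: ifP => Pu.
  rewrite (bigD1 u) //= big1 ?addr0 // => v /andP[_]; exact: hz.
by apply: big1 => v Pv; apply: hz; apply/eqP => vu; move: Pv; rewrite vu Pu.
Qed.

Lemma magn_diff x u i :
  `|magn g i (flip x u) - magn g i x| <= (if g u == i then 2 / n%:R else 0 : R).
Proof.
rewrite /magn -mulrBr -sumrB.
rewrite (@sum_single (fun v => g v == i) _ u); last first.
  by move=> v vu; rewrite flip_other // subrr.
case: ifP => _; last by rewrite mulr0 normr0.
rewrite flip_self normrM ger0_norm ?invr_ge0 ?ler0n //.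
have -> : `|spin (~~ x u) - spin (x u)| = 2 :> R.
  case: (x u); rewrite /spin /=; [rewrite -opprD normrN|rewrite opprK]; by rewrite ger0_norm //; lra.
by rewrite mulrC.
Qed.

Lemma magnL1_diff x u :
  `|magnL1 g (flip x u) - magnL1 g x| <= (2 / n%:R : R).
Proof.
rewrite /magnL1 -sumrB; apply: le_trans (ler_norm_sum _ _ _) _.
apply: (@le_trans _ _ (\sum_(i < m) (if g u == i then 2 / n%:R else 0 : R))).
  apply: ler_sum => i _; exact: le_trans (ler_dist_dist _ _) (magn_diff x u i).
rewrite (@sum_single_gen _ predT _ (g u)) /= ?eqxx //.
by move=> j; rewrite eq_sym => /negbTE ->.
Qed.

Lemma Lip_gen (a : 'I_m -> R) A f :
  (forall j, 1 <= A * a j) ->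
  (forall x u, `|f (flip x u) - f x| <= 2 / n%:R) ->
  Lipc a f (2 * A / n%:R).
Proof.
move=> Aa H x u; apply: le_trans (H x u) _.
have := Aa (g u); have := nR_gt0 => n0' Ag.
have -> : 2 * A / n%:R * a (g u) = (2 / n%:R) * (A * a (g u)) by ring.
rewrite -[X in X <= _]mulr1; apply: ler_wpM2l => //.
by apply: divr_ge0 => //; exact: ltW.
Qed.

Lemma final_gen (a p : 'I_m -> R) lam A :
  (forall i, 0 < a i) -> (forall i, a i <= 1) -> (forall i j, 0 < k i j) -> 0 <= beta ->
  (forall j, \sum_i a i * (p i * k i j) = lam * a j) -> block_partition p g ->
  (forall j, 1 <= A * a j) -> 0 <= A ->
  (1 - beta * lam) / n%:R <= 1 ->
  forall (D : nat -> R), 0 <= D 0%N ->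
  (forall t, 1 + (1 - (1 - beta * lam) / n%:R) ^+ 2 * D t <= D t.+1) ->
  forall t s f, (forall x u, `|f (flip x u) - f x| <= 2 / n%:R) ->
  Var beta k g t s f <= (2 * A / n%:R) ^+ 2 * D t.
Proof.
move=> apos a1 kpos b0 eig bp Aa A0 r1 D D0 DS t s f Hf.
rewrite VarE.
apply: (@main_ind a (1 - (1 - beta * lam) / n%:R)) => //.
- by move=> i; rewrite ltW ?apos ?a1.
- by move=> f' L L0 Lf'; apply: (@contract a p lam).
- by rewrite subr_ge0.
- by apply: divr_ge0; [apply: mulr_ge0 => //; lra | exact: ler0n].
- exact: Lip_gen.
Qed.

End Chain.


Theorem proposition4p11 (R : realType) (m : nat) (p : 'I_m -> R)
  (k : 'I_m -> 'I_m -> R) (beta : R) (a : 'I_m -> R) :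
  (0 < m)%N ->
  (forall i, 0 < p i) -> \sum_(i < m) p i = 1 ->
  (forall i j, k i j = k j i) -> (forall i j, 0 < k i j) ->
  0 <= beta ->
  left_perron p k a ->
  (beta < beta_cr p k a ->
   exists C : R, forall (n : nat) (g : 'I_n -> 'I_m),
     (0 < n)%N -> block_partition p g ->
     forall (s : conf n) (t : nat),
       \sum_(i < m) Var beta k g t s (magn g i) <= C / n%:R /\
       Var beta k g t s (magnL1 g) <= C / n%:R) /\
  (beta = beta_cr p k a ->
   exists C : R, forall (n : nat) (g : 'I_n -> 'I_m),
     (0 < n)%N -> block_partition p g ->
     forall (s : conf n) (t : nat),
       Var beta k g t s (magnL1 g) <= C * t%:R / (n%:R ^+ 2)).
Proof.
move=> m0 ppos psum ksym kpos b0 [apos [asum [lam eig]]].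
have lamE : \sum_(i < m) \sum_(j < m) a i * p i * k i j = lam.
  rewrite exchange_big /=.
  rewrite (eq_bigr (fun j => lam * a j)); last first.
    by move=> j _; rewrite -eig; apply: eq_bigr => i _; rewrite mulrA.
  by rewrite -mulr_sumr asum mulr1.
pose i0 : 'I_m := Ordinal m0.
have lam_pos : 0 < lam.
  have := eig i0.
  have : 0 < \sum_i a i * (p i * k i i0).
    rewrite (bigD1 i0) //=; apply: ltr_pwDl.
      by apply: mulr_gt0 => //; apply: mulr_gt0.
    by apply: sumr_ge0 => i _; apply: mulr_ge0; [exact: ltW | apply: mulr_ge0; exact: ltW].
  move=> H E; rewrite E in H; have := apos i0.
  move=> ha; by rewrite pmulr_lgt0 in H.
have a1 i : a i <= 1.
  rewrite -asum (bigD1 i) //= lerDl; apply: sumr_ge0 => j _; exact: ltW.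
pose A := \sum_(i < m) (a i)^-1.
have A0 : 0 <= A by apply: sumr_ge0 => i _; rewrite invr_ge0; exact: ltW.
have Aa j : 1 <= A * a j.
  have : (a j)^-1 <= A.
    rewrite /A (bigD1 j) //= lerDl; apply: sumr_ge0 => i _; rewrite invr_ge0; exact: ltW.
  move=> H; have aj := apos j.
  have := ler_wpM2r (ltW aj) H; rewrite mulVf //; exact: lt0r_neq0.
have bcr : beta_cr p k a = lam^-1.
  by rewrite /beta_cr (eq_bigr (fun i => \sum_(j < m) a i * p i * k i j)) // lamE.
have bl0 : 0 <= beta * lam by apply: mulr_ge0 => //; exact: ltW.
have magnH n (g : 'I_n -> 'I_m) i x u :
    `|magn g i (flip n x u) - magn g i x| <= (2 / n%:R : R).
  apply: (le_trans (magn_diff R m n g x u i)); case: ifP => // _.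
  by apply: divr_ge0 => //; exact: ler0n.
split.
- move=> blt.
  have e0 : 0 < 1 - beta * lam.
    rewrite subr_gt0; move: blt; rewrite bcr => blt.
    by rewrite -(mulVf (lt0r_neq0 lam_pos)) ltr_pM2r.
  set e := 1 - beta * lam in e0 *.
  exists (m%:R * (4 * A ^+ 2 / e)) => n g n0 bp s t.
  have nR : 0 < n%:R :> R by rewrite ltr0n.
  have n1 : 1 <= n%:R :> R by rewrite ler1n.
  have Vb f : (forall x u, `|f (flip n x u) - f x| <= 2 / n%:R) ->
      Var beta k g t s f <= (4 * A ^+ 2 / e) / n%:R.
    move=> Hf.
    apply: le_trans (@final_gen R m n beta k g n0 a p lam A apos a1 kpos b0 eig bp
       Aa A0 _ (fun _ => n%:R / e) _ _ t s f Hf) _.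
    + rewrite ler_pdivrMr // mul1r; rewrite /e; lra.
    + by apply: divr_ge0; [exact: ltW | exact: ltW].
    + move=> _ /=.
      set d := e / n%:R.
      have d0 : 0 < d by apply: divr_gt0.
      have d1 : d <= 1 by rewrite /d ler_pdivrMr // mul1r /e; lra.
      have -> : n%:R / e = d^-1 by rewrite /d invf_div.
      have -> : (1 - d) ^+ 2 * d^-1 = d^-1 - 2 + d by field; rewrite gt_eqF.
      lra.
    + rewrite le_eqVlt; apply/orP; left; apply/eqP; field.
      by rewrite !gt_eqF.
  split.
    apply: (@le_trans _ _ (\sum_(i < m) (4 * A ^+ 2 / e) / n%:R)).
      by apply: ler_sum => i _; apply: Vb => x u; exact: magnH.
    by rewrite sumr_const card_ord -[_ *+ m]mulr_natl mulrA.
  apply: le_trans (Vb _ (fun x u => magnL1_diff R m n g x u)) _.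
  have m1 : 1 <= m%:R :> R by rewrite ler1n.
  have K0 : 0 <= (4 * A ^+ 2 / e) / n%:R.
    apply: divr_ge0; last exact: ltW.
    by apply: divr_ge0; [apply: mulr_ge0; [lra | exact: sqr_ge0] | exact: ltW].
  have H := ler_wpM2r K0 m1; rewrite mul1r in H; apply: (le_trans H); by rewrite [m%:R * (_ / n%:R)]mulrA.
- move=> beq.
  have bl1 : beta * lam = 1 by rewrite beq bcr mulVf // gt_eqF.
  exists (4 * A ^+ 2) => n g n0 bp s t.
  have nR : 0 < n%:R :> R by rewrite ltr0n.
  apply: le_trans (@final_gen R m n beta k g n0 a p lam A apos a1 kpos b0 eig bp
       Aa A0 _ (fun t => t%:R) _ _ t s _ (fun x u => magnL1_diff R m n g x u)) _.
  + by rewrite bl1 subrr mul0r ler01.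
  + by [].
  + by move=> t' /=; rewrite bl1 subrr mul0r subr0 expr1n mul1r -natr1 addrC.
  + rewrite le_eqVlt; apply/orP; left; apply/eqP; field.
    by rewrite gt_eqF.
Qed.
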